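(* Let $(\pi_r)_{r\in\mathbb{N}}$ be a sequence of natural numbers (periods) and let $(k_t)_{t\in\mathbb{N}}$ be the multiperiodic sequence with periods $(\pi_r)_{r\in\mathbb{N}}$ and seeds $\sigma_r=1$ for all $r\in\mathbb{N}$. Then for every $r\in\mathbb{N}$ the limit $$f_r:=\lim_{T\to\infty}\frac{1}{T}\sum_{t=1}^T \mathbf{1}\{k_t\ge r\}$$ exists and $$f_r=\left(\frac{\pi_1-1}{\pi_1}\right)\left(\frac{\pi_2-1}{\pi_2}\right)\cdots\left(\frac{\pi_{r-1}-1}{\pi_{r-1}}\right),$$ with the empty product (for $r=1$) equal to $1$.
   Context: $\mathbb{N}=\{1,2,3,\dots\}$. Multiperiodic sequence: given periods $\pi_r\in\mathbb{N}$ and seeds $\sigma_r\in\{1,2,\dots,\pi_r\}$ for $r\in\mathbb{N}$, the sequence $(k_t)_{t\in\mathbb{N}}$ with values in $\mathbb{N}\cup\{\infty\}$ is defined by the requirement that for each $r\in\mathbb{N}$, if $(k^{(r)}_t)_{t\in\mathbb{N}}$ denotes the subsequence of $(k_t)$ obtained by deleting all tokens $k_t<r$, then $k^{(r)}_t=r \iff t\equiv\sigma_r \pmod{\pi_r}$; any $k_t$ left undefined by these constraints for all $r$ is set to $k_t=\infty$. Equivalently, it is generated by clocks $\phi_r$ initialized to $\phi_r=\sigma_r$: to produce each token, scan $r=1,2,\dots$, decrementing each clock $\phi_r>1$, until the first $r$ with $\phi_r=1$; output $k_t=r$ and reset $\phi_r=\pi_r$ (if no such $r$ exists, $k_t=\infty$).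 With all seeds equal to $1$ the sequence is finite (all $k_t<\infty$). $\mathbf{1}\{\cdot\}$ is the indicator. *)

(* Defs.v *)
From Stdlib Require Import ClassicalEpsilon.
From mathcomp Require Import all_boot all_order all_algebra.
From mathcomp Require Import all_classical all_reals all_analysis.

Set Implicit Arguments. Unset Strict Implicit. Unset Printing Implicit Defensive.

(* Indices r, t range over N = {1,2,...}; index 0 of nat-indexed families is
   unused.  A token value [None : option nat] stands for infinity. *)

Definition first_one (phi : nat -> nat) : option nat :=
  match excluded_middle_informative (exists n, (0 < n) && (phi n == 1)) with
  | left H => Some (ex_minn H)
  | right _ => None
  end.

(* One token-production step of the clock mechanism: scan r = 1,2,...,
   decrementing each clock > 1, until the first r with clock = 1, which is
   reset to pi r. *)
Definition clock_step (pi phi : nat -> nat) : nat -> nat := fun r =>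
  match first_one phi with
  | Some k => if r < k then (if 1 < phi r then (phi r).-1 else phi r)
              else if r == k then pi r else phi r
  | None => if 1 < phi r then (phi r).-1 else phi r
  end.

Fixpoint clocks (pi sigma : nat -> nat) (t : nat) : nat -> nat :=
  match t with
  | 0 => sigma
  | t'.+1 => clock_step pi (clocks pi sigma t')
  end.

Definition multiperiodic (pi sigma : nat -> nat) (t : nat) : option nat :=
  first_one (clocks pi sigma t.-1).

Definition ind_ge (k : option nat) (r : nat) : nat :=
  match k with
  | Some x => (r <= x)%N
  | None => 1%N
  end.

(* Main.v *)
Require Import Defs.
From mathcomp Require Import all_boot all_order all_algebra.
From mathcomp Require Import all_classical all_reals all_analysis.
From mathcomp Require Import zify lra.
From Stdlib Require Import ClassicalEpsilon.
Import Order.TTheory GRing.Theory Num.Theory.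
Import numFieldNormedType.Exports.
Local Open Scope classical_set_scope.
Local Open Scope ring_scope.

Lemma first_one_spec (phi : nat -> nat) n : (0 < n)%N -> phi n = 1%N ->
  exists k, first_one phi = Some k /\ (0 < k)%N /\ phi k = 1%N /\
    forall m, (0 < m)%N -> (m < k)%N -> phi m <> 1%N.
Proof.
move=> n0 pn; rewrite /first_one.
case: excluded_middle_informative => [H|H]; last first.
  by exfalso; apply: H; exists n; rewrite n0 pn.
case: ex_minnP => k /andP[k0 /eqP pk] kmin; exists k; split => //; split => //; split => //.
move=> m m0 mk pm; have := kmin m; rewrite m0 pm eqxx => /(_ isT).
by rewrite leqNgt mk.
Qed.

Definition C pi s := clocks pi (fun _ => 1%N) s.

Lemma C_large pi s r : (s < r)%N -> C pi s r = 1%N.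
Proof.
elim: s r => [//|s IH] r sr.
rewrite /C /= /clock_step -/(C pi s).
have [k [-> [k0 [_ kmin]]]] := @first_one_spec (C pi s) s.+1 (ltn0Sn s) (IH _ (ltnSn s)).
have ks : (k <= s.+1)%N.
  rewrite leqNgt; apply/negP => sk; exact: (kmin s.+1 (ltn0Sn s) sk (IH _ (ltnSn s))).
have -> : (r < k)%N = false by apply/negbTE; rewrite -leqNgt; lia.
have -> : (r == k) = false by apply/negbTE; lia.
apply: IH; lia.
Qed.

Definition K pi s := odflt 0%N (first_one (C pi s)).

Lemma KP pi s : first_one (C pi s) = Some (K pi s) /\ (0 < K pi s)%N /\ C pi s (K pi s) = 1%N /\
    forall m, (0 < m)%N -> (m < K pi s)%N -> C pi s m <> 1%N.
Proof.
have [k [E H]] := @first_one_spec (C pi s) s.+1 (ltn0Sn s) (@C_large pi s s.+1 (ltnSn s)).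
by rewrite /K E.
Qed.

Definition cnt pi r s := (\sum_(i < s) (r <= K pi i))%N.
Definition fir pi r s := (\sum_(i < s) (K pi i == r))%N.

Lemma inv pi (hpi : forall r, (0 < r)%N -> (0 < pi r)%N) s r : (0 < r)%N ->
  (0 < C pi s r <= pi r)%N /\ (cnt pi r s + C pi s r = pi r * fir pi r s + 1)%N.
Proof.
move=> r0; elim: s => [|s [IH1 IH2]].
  by rewrite /C /cnt /fir /= !big_ord0 hpi ?muln0.
rewrite /cnt /fir !big_ord_recr /= -/(cnt pi r s) -/(fir pi r s).
have [E [k0 [Ck kmin]]] := KP pi s.
rewrite /C /= /clock_step -/(C pi s) E.
case: (ltngtP r (K pi s)) => rk.
- have := kmin r r0 rk => ne.
  have -> : (1 < C pi s r)%N by lia.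
  split; lia.
  split; lia.
- subst r.
  split; first by rewrite hpi ?leqnn.
  lia.
Qed.

Lemma cnt_split pi r s : cnt pi r s = (cnt pi r.+1 s + fir pi r s)%N.
Proof.
rewrite /cnt /fir -big_split /=; apply: eq_bigr => i _.
by case: ltngtP.
Qed.

Lemma key pi (hpi : forall r, (0 < r)%N -> (0 < pi r)%N) r T : (0 < r)%N ->
  exists d, (d < pi r)%N /\ (pi r * cnt pi r.+1 T + d = (pi r - 1) * cnt pi r T)%N.
Proof.
move=> r0; have [/andP[c0 cp] E] := @inv pi hpi T r r0.
have S := cnt_split pi r T.
exists (C pi T r).-1; split; first lia.
rewrite S in E *.
nia.
Qed.

Lemma cnt1 pi T : cnt pi 1 T = T.
Proof.
elim: T => [|T IH]; first by rewrite /cnt big_ord0.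
by rewrite /cnt big_ord_recr /= -/(cnt pi 1 T) IH (KP pi T).2.1 addn1.
Qed.

Lemma sum_eq pi T r :
  (\sum_(1 <= t < T.+1) ind_ge (multiperiodic pi (fun _ => 1%N) t) r)%N = cnt pi r T.
Proof.
rewrite big_add1 /= big_mkord /cnt; apply: eq_bigr => i _.
rewrite /multiperiodic /=.
by have := (KP pi i).1; rewrite /C => ->.
Qed.

Lemma inv_cvg0 (R : realType) : (fun T : nat => (T%:R : R)^-1) @ \oo --> 0.
Proof.
rewrite -(cvg_shiftS (fun T : nat => (T%:R : R)^-1)).
exact: cvg_harmonic.
Qed.

Lemma mainlim (R : realType) pi (hpi : forall r, (0 < r)%N -> (0 < pi r)%N) r : (0 < r)%N ->
  (fun T : nat => (cnt pi r T)%:R / T%:R : R) @ \oo -->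
  \prod_(1 <= i < r) (((pi i)%:R - 1) / (pi i)%:R : R).
Proof.
elim: r => [//|r IH] _.
case: (posnP r) => [->|r0].
  rewrite big_geq //.
  apply: (cvg_trans _ (cvg_cst (1:R))).
  apply: near_eq_cvg; exists 1%N => // T /= T1.
  by rewrite cnt1 divff // pnatr_eq0 -lt0n.
  exact: eventually_filter.
have IHr := IH r0.
rewrite big_nat_recr //=.
set p := pi r.
have p0 : (0 < p)%N by exact: hpi.
set a : R := ((p%:R - 1) / p%:R).
set L := \prod_(1 <= i < r) _.
have Hv : (fun T : nat => a * ((cnt pi r T)%:R / T%:R : R)) @ \oo --> a * L.
  exact: cvgMl_tmp IHr.
rewrite [L * a]mulrC.
apply: (@squeeze_cvgr _ _ _ _ (fun T => a * ((cnt pi r T)%:R / T%:R) - T%:R^-1)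
          (fun T => a * ((cnt pi r T)%:R / T%:R))).
- near=> T.
  have [d [dp E]] := @key pi hpi r T r0.
  have E' : (cnt pi r.+1 T)%:R = (((p%:R - 1) * (cnt pi r T)%:R - d%:R) / p%:R : R).
    have -> : (p%:R - 1 : R) = (p - 1)%:R by rewrite natrB.
    rewrite -natrM -E natrD addrK natrM -/p [RHS]mulrC mulKf //.
    by rewrite pnatr_eq0 -lt0n.
  have -> : (cnt pi r.+1 T)%:R / T%:R = a * ((cnt pi r T)%:R / T%:R) - d%:R / p%:R * T%:R^-1 :> R.
    rewrite E' /a.
    rewrite mulrBl mulrBl !mulrA.
    congr (_ - _).
    congr (_ / _); exact: mulrAC.
  have dp1 : (d%:R / p%:R : R) <= 1.
    rewrite ler_pdivrMr ?mul1r ?ler_nat ?ltr0n //; exact: ltnW.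
  have d0 : (0 : R) <= d%:R / p%:R by apply: divr_ge0.
  have T0 : (0 : R) <= T%:R^-1 by rewrite invr_ge0.
  have hx : d%:R / p%:R * T%:R^-1 <= T%:R^-1 :> R.
    by rewrite -[X in _ <= X]mul1r; apply: ler_wpM2r.
  have hx0 : 0 <= d%:R / p%:R * T%:R^-1 :> R by exact: mulr_ge0.
  apply/andP; split; lra.
- have := cvgB Hv (inv_cvg0 R).
  move=> /(_ eventually_filter); rewrite subr0; exact.
- exact: Hv.
Unshelve. all: end_near.
Qed.

Theorem theorem1 (R : realType) (pi : nat -> nat)
  (hpi : forall r, (0 < r)%N -> (0 < pi r)%N) (r : nat) (hr : (0 < r)%N) :
  (fun T : nat =>
     (\sum_(1 <= t < T.+1) ind_ge (multiperiodic pi (fun _ => 1%N) t) r)%N%:R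
       / T%:R : R) @ \oo -->
  \prod_(1 <= i < r) (((pi i)%:R - 1) / (pi i)%:R : R).
Proof.
have -> : (fun T : nat =>
     (\sum_(1 <= t < T.+1) ind_ge (multiperiodic pi (fun _ => 1%N) t) r)%N%:R
       / T%:R : R) = (fun T : nat => (cnt pi r T)%:R / T%:R : R).
  by apply: funext => T; rewrite sum_eq.
exact: mainlim.
Qed.
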